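(* Let $\mathbf M=(M,\vee_{\mathbf M},(\sqsubseteq^n_{\mathbf M})_{n\ge1})$ be a multi-argument specialization semilattice and let $\widetilde{\mathbf M}$, $K$ and $\upsilon_{\mathbf M}$ be as constructed in the context. Then: (1) $\widetilde{\mathbf M}$ is a principal regular multi-argument specialization semilattice. (2) $\upsilon_{\mathbf M}$ is an embedding of $\mathbf M$ into $\widetilde{\mathbf M}$. (3) For every principal regular multi-argument specialization semilattice $\mathbf T$ and every homomorphism $\eta:\mathbf M\to\mathbf T$ there is a unique $K$-homomorphism $\widetilde\eta:\widetilde{\mathbf M}\to\mathbf T$ such that $\widetilde\eta(\upsilon_{\mathbf M}(a))=\eta(a)$ for all $a\in M$. (4) If $\mathbf U$ is another multi-argument specialization semilattice and $\psi:\mathbf M\to\mathbf U$ is a homomorphism, then there is a unique $K$-homomorphism $\widetilde\psi:\widetilde{\mathbf M}\to\widetilde{\mathbf U}$ such that $\widetilde\psi(\upsilon_{\mathbf M}(a))=\upsilon_{\mathbf U}(\psi(a))$ for all $a\in M$ (where $\widetilde{\mathbf U},\upsilon_{\mathbf U}$ are constructed from $\mathbf U$ in the same way).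
   Context: A multi-argument specialization semilattice is a join semilattice $(M,\vee)$ (order $a\le b$ iff $a\vee b=b$) with, for each $n\ge1$, an $(n+1)$-ary relation $a\sqsubseteq^n b_1,\dots,b_n$ (also written $a\sqsubseteq b_1,\dots,b_n$) such that: (M1) $a\sqsubseteq a$; (M2) $a\sqsubseteq b_1,\dots,b_n$ and $b_1\sqsubseteq c$ imply $a\sqsubseteq c,b_2,\dots,b_n$; (M3) $a\le b$ and $b\sqsubseteq c_1,\dots,c_m$ imply $a\sqsubseteq c_1,\dots,c_m$; (M4) $a\sqsubseteq b_1,\dots,b_n$ implies $a\sqsubseteq b_{\sigma1},\dots,b_{\sigma n}$ for every permutation $\sigma$; (M5) $a\sqsubseteq b_1,\dots,b_n,b_n$ implies $a\sqsubseteq b_1,\dots,b_n$; (M6) $a\sqsubseteq b_1,\dots,b_n$ implies $a\sqsubseteq b_1,\dots,b_n,b_{n+1}$; (M7) $a\sqsubseteq b_1,\dots,b_n$ and $a_1\sqsubseteq b_1,\dots,b_n$ imply $a\vee a_1\sqsubseteq b_1,\dots,b_n$. It is principal if for every $x$ there is a $\le$-largest $y$ with $y\sqsubseteq^1 x$, denoted $Kx$; a principal one is regular if $a\sqsubseteq^n b_1,\dots,b_n$ holds iff $a\le Kb_1\vee\dots\vee Kb_n$. A homomorphism is a join-preserving map $\varphi$ with $a\sqsubseteq^n b_1,\dots,b_n\Rightarrow\varphi(a)\sqsubseteq^n\varphi(b_1),\dots,\varphi(b_n)$ for all $n$; an embedding is an injective homomorphism for which the converse implications also hold. A $K$-homomorphism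 between principal ones is a homomorphism $\varphi$ with $\varphi(Ka)=K\varphi(a)$ for all $a$. Construction: let $M^{<\omega}$ be the set of finite subsets of $M$. On $M\times M^{<\omega}$ put $(a,\{b_1,\dots,b_h\})\precsim(c,\{d_1,\dots,d_k\})$ iff (a1) there is $d\in M$ with $d\sqsubseteq_{\mathbf M}d_1,\dots,d_k$ and $a\le_{\mathbf M}c\vee_{\mathbf M}d$ (if $k=0$ this reads $a\le_{\mathbf M}c$), and (a2) for every $i\le h$ there is $j\le k$ with $b_i\sqsubseteq^1_{\mathbf M}d_j$. Let $x\sim y$ iff $x\precsim y$ and $y\precsim x$ (an equivalence relation and a congruence for the product semilattice $(M,\vee_{\mathbf M})\times(M^{<\omega},\cup)$). Let $\widetilde M$ be the quotient, with classes $[a,\{b_1,\dots,b_h\}]$ and join $[a,\{b_1,\dots,b_h\}]\vee[c,\{d_1,\dots,d_k\}]=[a\vee_{\mathbf M}c,\{b_1,\dots,b_h,d_1,\dots,d_k\}]$, and $\le$ the induced order. Define $K[a,\{b_1,\dots,b_h\}]=[a,\{a\vee_{\mathbf M}b_1\vee_{\mathbf M}\dots\vee_{\mathbf M}b_h\}]$ (well defined). For $n\ge1$ define $x\sqsubseteq^n y_1,\dots,y_n$ in $\widetilde M$ iff $x\le Ky_1\vee\dots\vee Ky_n$. Set $\widetilde{\mathbf M}=(\widetilde M,\vee,(\sqsubseteq^n)_{n\ge1})$ and $\upsilon_{\mathbf M}(a)=[a,\emptyset]$ for $a\in M$. *)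

(* Defs.v *)
From Stdlib Require Import List Permutation ClassicalEpsilon.
Import ListNotations.
Set Implicit Arguments.

(* Raw data of a multi-argument specialization semilattice.
   [mspec a b bs] means  a ⊑^n b, b_2, ..., b_n  with  b :: bs = [b_1;...;b_n],
   so the relation is only given for n >= 1. *)
Record msl := MSL {
  car :> Type;
  mjoin : car -> car -> car;
  mspec : car -> car -> list car -> Prop }.

Definition mle (M : msl) (a b : M) : Prop := mjoin M a b = b.

Definition bigj {A : Type} (j : A -> A -> A) (k : A) (ks : list A) : A :=
  fold_left j ks k.

Record is_mass (M : msl) : Prop := {
  sl_assoc : forall a b c : M, mjoin M a (mjoin M b c) = mjoin M (mjoin M a b) c;
  sl_comm : forall a b : M, mjoin M a b = mjoin M b a;
  sl_idem : forall a : M, mjoin M a a = a;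
  M1 : forall a : M, mspec M a a [];
  M2 : forall (a b1 c : M) (bs : list M),
         mspec M a b1 bs -> mspec M b1 c [] -> mspec M a c bs;
  M3 : forall (a b c : M) (cs : list M),
         mle M a b -> mspec M b c cs -> mspec M a c cs;
  M4 : forall (a b c : M) (bs cs : list M),
         mspec M a b bs -> Permutation (b :: bs) (c :: cs) -> mspec M a c cs;
  M5 : forall (a b : M) (bs : list M),
         mspec M a b (bs ++ [last bs b]) -> mspec M a b bs;
  M6 : forall (a b c : M) (bs : list M),
         mspec M a b bs -> mspec M a b (bs ++ [c]);
  M7 : forall (a a1 b : M) (bs : list M),
         mspec M a b bs -> mspec M a1 b bs -> mspec M (mjoin M a a1) b bs }.

Definition isK (M : msl) (x y : M) : Prop :=
  mspec M y x [] /\ forall z, mspec M z x [] -> mle M z y.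

Definition principal (M : msl) : Prop := forall x : M, exists y, isK M x y.

Definition regular (M : msl) : Prop :=
  principal M /\
  forall (a b : M) (bs : list M),
    mspec M a b bs <->
    exists (kb : M) (kbs : list M),
      isK M b kb /\ Forall2 (isK M) bs kbs /\ mle M a (bigj (mjoin M) kb kbs).

Definition hom {M T : msl} (f : M -> T) : Prop :=
  (forall a b : M, f (mjoin M a b) = mjoin T (f a) (f b)) /\
  (forall (a b : M) (bs : list M), mspec M a b bs -> mspec T (f a) (f b) (map f bs)).

Definition embedding {M T : msl} (f : M -> T) : Prop :=
  hom f /\ (forall a b : M, f a = f b -> a = b) /\
  (forall (a b : M) (bs : list M), mspec T (f a) (f b) (map f bs) -> mspec M a b bs).

Definition Khom {M T : msl} (f : M -> T) : Prop :=
  hom f /\ forall a ka : M, isK M a ka -> isK T (f a) (f ka).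

Section Construction.
Variable M : msl.

(* finite subsets of M are represented by lists *)
Definition prec (x y : M * list M) : Prop :=
  let (a, B) := x in let (c, D) := y in
  (match D with
   | [] => mle M a c
   | d1 :: ds => exists d : M, mspec M d d1 ds /\ mle M a (mjoin M c d)
   end) /\
  (forall b, In b B -> exists d, In d D /\ mspec M b d []).

Definition sim (x y : M * list M) : Prop := prec x y /\ prec y x.

Definition tcar : Type := { P : M * list M -> Prop | exists x, P = sim x }.

Definition tcls (x : M * list M) : tcar := exist _ (sim x) (ex_intro _ x eq_refl).

Definition trep (X : tcar) : M * list M :=
  proj1_sig (constructive_indefinite_description _ (proj2_sig X)).

Definition tjoin (X Y : tcar) : tcar :=
  tcls (mjoin M (fst (trep X)) (fst (trep Y)), snd (trep X) ++ snd (trep Y)).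

Definition tK (X : tcar) : tcar :=
  tcls (fst (trep X), [bigj (mjoin M) (fst (trep X)) (snd (trep X))]).

Definition tle (X Y : tcar) : Prop := tjoin X Y = Y.

Definition tspec (X Y : tcar) (Ys : list tcar) : Prop :=
  tle X (bigj tjoin (tK Y) (map tK Ys)).

Definition Mtilde : msl := MSL tjoin tspec.

Definition ups (a : M) : Mtilde := tcls (a, []).

End Construction.

(* Main.v *)
Require Import Defs.
From Stdlib Require Import List Permutation ClassicalEpsilon FunctionalExtensionality PropExtensionality ProofIrrelevance.
Import ListNotations.
Set Implicit Arguments.

Record isSL (A : Type) (j : A -> A -> A) : Prop := {
  jA : forall a b c, j a (j b c) = j (j a b) c;
  jC : forall a b, j a b = j b a;
  jI : forall a, j a a = a }.

Section SL.
Variable A : Type.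
Variable j : A -> A -> A.
Hypothesis H : isSL j.
Definition le (a b : A) := j a b = b.

Lemma le_refl a : le a a.
Proof. apply (jI H). Qed.
Lemma le_trans a b c : le a b -> le b c -> le a c.
Proof. unfold le; intros H1 H2. rewrite <- H2, (jA H), H1. reflexivity. Qed.
Lemma le_antisym a b : le a b -> le b a -> a = b.
Proof. unfold le; intros H1 H2. rewrite <- H2, (jC H), H1. reflexivity. Qed.
Lemma le_jl a b : le a (j a b).
Proof. unfold le. rewrite (jA H), (jI H). reflexivity. Qed.
Lemma le_jr a b : le b (j a b).
Proof. rewrite (jC H). apply le_jl. Qed.
Lemma le_join_iff a b c : le (j a b) c <-> le a c /\ le b c.
Proof. split.
- intro H1. split; [apply le_trans with (j a b); [apply le_jl|exact H1] | apply le_trans with (j a b); [apply le_jr|exact H1]].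
- unfold le; intros [H1 H2]. rewrite <- (jA H), H2, H1. reflexivity. Qed.
Lemma le_ext x y : (forall z, le x z <-> le y z) -> x = y.
Proof. intro E. apply le_antisym; [apply (proj2 (E y))|apply (proj1 (E x))]; apply le_refl. Qed.
Lemma le_bigj_iff k l z : le (bigj j k l) z <-> forall x, In x (k :: l) -> le x z.
Proof. revert k; induction l as [|y l IH]; intro k; simpl.
- split; [intros H1 x [<-|[]]; auto | intro H1; apply H1; auto].
- rewrite IH. split.
  + intros H1 x [<-|[<-|Hx]].
    * apply (proj1 (proj1 (le_join_iff _ _ _) (H1 _ (or_introl eq_refl)))).
    * apply (proj2 (proj1 (le_join_iff _ _ _) (H1 _ (or_introl eq_refl)))).
    * apply H1; right; exact Hx.
  + intros H1 x [<-|Hx].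
    * apply le_join_iff; split; apply H1; simpl; auto.
    * apply H1; simpl; auto. Qed.
Lemma bigj_ub k l x : In x (k :: l) -> le x (bigj j k l).
Proof. intro Hx. apply (proj1 (le_bigj_iff k l _)); auto. apply le_refl. Qed.
Lemma bigj_sub k l k' l' : (forall x, In x (k :: l) -> In x (k' :: l')) -> le (bigj j k l) (bigj j k' l').
Proof. intro S. apply le_bigj_iff. intros x Hx. apply bigj_ub; auto. Qed.
Lemma bigj_monok k k' l : le k k' -> le (bigj j k l) (bigj j k' l).
Proof. intro Hk. apply le_bigj_iff. intros x [<-|Hx].
- eapply le_trans; [exact Hk|]. apply bigj_ub; left; auto.
- apply bigj_ub; right; auto. Qed.
Lemma bigj_ind (P : A -> Prop) k l : P k -> (forall x, In x l -> P x) ->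
  (forall u v, P u -> P v -> P (j u v)) -> P (bigj j k l).
Proof. revert k; induction l as [|y l IH]; intros k Pk Pl Pj; simpl; auto.
apply IH; auto. apply Pj; auto. apply Pl; left; auto. intros; apply Pl; right; auto. Qed.
Lemma bigj_map_mono (B : Type) (g h : B -> A) k l : (forall x, le (g x) (h x)) ->
  le (bigj j k (map g l)) (bigj j k (map h l)).
Proof. intro G. apply le_bigj_iff. intros x [<-|Hx]. apply bigj_ub; left; auto.
apply in_map_iff in Hx. destruct Hx as [y [<- Hy]]. eapply le_trans; [apply G|].
apply bigj_ub. right. apply in_map; auto. Qed.
Lemma bigj_join_app k1 k2 l1 l2 : bigj j (j k1 k2) (l1 ++ l2) = j (bigj j k1 l1) (bigj j k2 l2).
Proof. apply le_ext. intro z. rewrite le_join_iff, !le_bigj_iff. split.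
- intros H1; split; intros x [<-|Hx].
  + eapply le_trans; [apply le_jl|]. apply H1; left; auto.
  + apply H1; right; apply in_or_app; auto.
  + eapply le_trans; [apply le_jr|]. apply H1; left; auto.
  + apply H1; right; apply in_or_app; auto.
- intros [H1 H2] x [<-|Hx].
  + apply le_join_iff; split; [apply H1|apply H2]; left; auto.
  + apply in_app_or in Hx; destruct Hx; [apply H1|apply H2]; right; auto. Qed.
End SL.

Lemma hom_bigj (A B : Type) (j1 : A -> A -> A) (j2 : B -> B -> B) (h : A -> B) k l :
  (forall a b, h (j1 a b) = j2 (h a) (h b)) -> h (bigj j1 k l) = bigj j2 (h k) (map h l).
Proof. intro Hh. revert k; induction l as [|y l IH]; intro k; simpl; auto.
rewrite IH, Hh. reflexivity. Qed.

Lemma slM (M : msl) (HM : is_mass M) : isSL (mjoin M).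
Proof. constructor; apply HM. Qed.
Section Pairs.
Variable M : msl.
Hypothesis HM : is_mass M.
Local Notation j := (mjoin M).
Local Notation sp := (mspec M).
Local Notation lem := (le (mjoin M)).

Definition SP (a : M) (L : list M) : Prop :=
  match L with [] => False | b :: bs => sp a b bs end.

Lemma SP_perm a L L' : Permutation L L' -> SP a L -> SP a L'.
Proof. intros P. destruct L as [|b bs]; [contradiction|].
destruct L' as [|c cs]. { exfalso. apply Permutation_sym in P. exact (Permutation_nil_cons P). }
simpl. intro S. exact (M4 HM _ S P). Qed.

Lemma SP_dup a x L : SP a (x :: x :: L) -> SP a (x :: L).
Proof. destruct L as [|y L'].
- simpl. intro S. apply (M5 HM a x []). simpl. exact S.
- intro S. assert (S2 : SP a (y :: (L' ++ [x]) ++ [last (L' ++ [x]) y])).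
  { rewrite last_last. apply SP_perm with (x :: x :: y :: L'); [|exact S].
    rewrite <- app_assoc. simpl.
    apply perm_trans with (y :: x :: x :: L').
    - apply perm_trans with (x :: y :: x :: L'). apply perm_skip, perm_swap. apply perm_swap.
    - apply perm_skip. change (x :: x :: L') with ([x; x] ++ L'). apply Permutation_app_comm. }
  simpl in S2. apply (M5 HM) in S2.
  apply SP_perm with (y :: L' ++ [x]); [|exact S2].
  apply perm_trans with (x :: y :: L'). 2: apply Permutation_refl.
  change (y :: L' ++ [x]) with ((y :: L') ++ [x]). apply Permutation_sym, Permutation_cons_append. Qed.

Lemma SP_add a L c : SP a L -> SP a (c :: L).
Proof. destruct L as [|b bs]; [contradiction|]. intro S.
apply SP_perm with (b :: bs ++ [c]). 
- change (b :: bs ++ [c]) with ((b :: bs) ++ [c]). apply Permutation_sym, Permutation_cons_append.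
- exact (M6 HM _ _ c _ S). Qed.

Lemma SP_dedupe a x L : In x L -> SP a (x :: L) -> SP a L.
Proof. intros Hx S. apply in_split in Hx. destruct Hx as [l1 [l2 ->]].
apply SP_perm with (x :: l1 ++ l2). apply Permutation_middle.
apply SP_dup. apply SP_perm with (x :: l1 ++ x :: l2); [|exact S].
apply perm_skip. apply Permutation_sym, Permutation_middle. Qed.

Lemma SP_app a L1 L2 : SP a L1 -> SP a (L2 ++ L1).
Proof. intro S. induction L2; simpl; [exact S|apply SP_add; exact IHL2]. Qed.

Lemma SP_trans_gen a L : forall M0 L', SP a (L ++ M0) ->
  (forall x, In x L -> exists y, In y L' /\ sp x y []) -> SP a (M0 ++ L').
Proof. induction L as [|x L IH]; intros M0 L' S Hx.
- simpl in S. apply SP_perm with (L' ++ M0). apply Permutation_app_comm. apply SP_app; auto.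
- destruct (Hx x (or_introl eq_refl)) as [y [Hy Sxy]].
  simpl in S. pose proof (M2 HM _ _ _ _ S Sxy) as S1.
  assert (S2 : SP a (L ++ (M0 ++ [y]))).
  { apply SP_perm with (y :: L ++ M0); [|exact S1]. rewrite app_assoc. apply Permutation_cons_append. }
  apply IH with (L' := L') in S2; [|intros; apply Hx; right; auto].
  apply SP_dedupe with y. apply in_or_app; right; auto.
  apply SP_perm with ((M0 ++ [y]) ++ L'); [|exact S2].
  rewrite <- app_assoc. simpl. apply Permutation_sym, Permutation_middle. Qed.

Lemma SP_trans a L L' : SP a L ->
  (forall x, In x L -> exists y, In y L' /\ sp x y []) -> SP a L'.
Proof. intros S Hx. apply (@SP_trans_gen a L [] L'); auto. rewrite app_nil_r; auto. Qed.

Lemma sp_le a b : lem a b -> sp a b [].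
Proof. intro H. apply (@M3 _ HM a b); auto. apply (M1 HM). Qed.

Lemma sp_trans1 a b c : sp a b [] -> sp b c [] -> sp a c [].
Proof. intros; eapply (M2 HM); eauto. Qed.

Lemma SP_in x L : In x L -> SP x L.
Proof. intro Hx. apply SP_trans with [x]. apply (M1 HM).
intros y [<-|[]]. exists x; split; [exact Hx|]. apply (M1 HM). Qed.

Lemma SP_M3 a b L : lem a b -> SP b L -> SP a L.
Proof. destruct L; simpl; auto. intros; eapply (M3 HM); eauto. Qed.

Lemma SP_M7 a b L : SP a L -> SP b L -> SP (j a b) L.
Proof. destruct L; simpl; auto. intros; apply (M7 HM); auto. Qed.

Lemma SP_bigj b bs : SP (bigj j b bs) (b :: bs).
Proof. apply bigj_ind. apply SP_in; left; auto. intros; apply SP_in; right; auto.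
intros; apply SP_M7; auto. Qed.

Lemma SP_sp1 d L s : SP d L -> (forall x, In x L -> lem x s) -> sp d s [].
Proof. intros S Hx. change (SP d [s]). apply SP_trans with L; auto.
intros x Hxx. exists s. split; [left; auto|]. apply sp_le; auto. Qed.

Definition A1 (a c : M) (D : list M) : Prop := lem a c \/ exists d, SP d D /\ lem a (j c d).

Lemma A1_iff a c D : (match D with [] => mle M a c | d1 :: ds => exists d, sp d d1 ds /\ mle M a (j c d) end) <-> A1 a c D.
Proof. unfold A1. destruct D as [|d1 ds].
- split; [left; auto|]. intros [H|[d [[] _]]]; auto.
- split; [intros [d [S Hd]]; right; exists d; auto|].
  intros [H|[d [S Hd]]]; [|exists d; auto].
  exists d1. split. apply (SP_in d1 (d1 :: ds)); left; auto.
  eapply le_trans. apply (slM HM). exact H. apply le_jl, (slM HM). Qed.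

Definition A2 (B D : list M) : Prop := forall b, In b B -> exists d, In d D /\ sp b d [].

Lemma prec_iff x y : prec M x y <-> A1 (fst x) (fst y) (snd y) /\ A2 (snd x) (snd y).
Proof. destruct x as [a B], y as [c D]. unfold prec. simpl. rewrite <- A1_iff. unfold A2. tauto. Qed.

Lemma prec_refl x : prec M x x.
Proof. apply prec_iff. split. left. apply le_refl, (slM HM).
intros b Hb. exists b; split; auto. apply (M1 HM). Qed.

Lemma A2_trans B D F : A2 B D -> A2 D F -> A2 B F.
Proof. intros H1 H2 b Hb. destruct (H1 b Hb) as [d [Hd S1]]. destruct (H2 d Hd) as [f [Hf S2]].
exists f; split; auto. eapply sp_trans1; eauto. Qed.

Lemma prec_trans x y z : prec M x y -> prec M y z -> prec M x z.
Proof. rewrite !prec_iff. destruct x as [a B], y as [c D], z as [e F]; simpl.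
intros [H1 H2] [H3 H4]. split; [|eapply A2_trans; eauto].
pose proof (slM HM) as SL.
destruct H1 as [H1|[d [Sd H1]]]; destruct H3 as [H3|[f [Sf H3]]].
- left. eapply le_trans; eauto.
- right. exists f. split; auto. eapply le_trans; eauto.
- right. exists d. split. apply SP_trans with D; auto.
  eapply le_trans; [exact SL|exact H1|]. apply le_join_iff; auto. split.
  eapply le_trans; eauto. apply le_jl; auto. apply le_jr; auto.
- right. exists (j f d). split. apply SP_M7; auto. apply SP_trans with D; auto.
  eapply le_trans; [exact SL|exact H1|]. apply le_join_iff; auto. split.
  + eapply le_trans; [exact SL|exact H3|]. apply le_join_iff; auto. split. apply le_jl; auto.
    eapply le_trans; [exact SL| |apply le_jr; auto]. apply le_jl; auto.
  + eapply le_trans; [exact SL| |apply le_jr; auto]. apply le_jr; auto. Qed.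

Definition pjoin (x y : M * list M) : M * list M := (j (fst x) (fst y), snd x ++ snd y).

Lemma prec_jl x y : prec M x (pjoin x y).
Proof. apply prec_iff. destruct x as [a B], y as [c D]; simpl. split.
left. apply le_jl, (slM HM). intros b Hb. exists b. split. apply in_or_app; auto. apply (M1 HM). Qed.
Lemma prec_jr x y : prec M y (pjoin x y).
Proof. apply prec_iff. destruct x as [a B], y as [c D]; simpl. split.
left. apply le_jr, (slM HM). intros b Hb. exists b. split. apply in_or_app; auto. apply (M1 HM). Qed.
Lemma prec_lub x y z : prec M x z -> prec M y z -> prec M (pjoin x y) z.
Proof. rewrite !prec_iff. destruct x as [a B], y as [c D], z as [e F]; simpl.
pose proof (slM HM) as SL.
intros [H1 H2] [H3 H4]. split.
2: { intros b Hb. apply in_app_or in Hb. destruct Hb; auto. }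
destruct H1 as [H1|[d [Sd H1]]]; destruct H3 as [H3|[f [Sf H3]]].
- left. apply le_join_iff; auto.
- right. exists f. split; auto. apply le_join_iff; auto. split; auto.
  eapply le_trans; eauto. apply le_jl; auto.
- right. exists d. split; auto. apply le_join_iff; auto. split; auto.
  eapply le_trans; eauto. apply le_jl; auto.
- right. exists (j d f). split. apply SP_M7; auto.
  apply le_join_iff; auto. split.
  + eapply le_trans; [exact SL|exact H1|]. apply le_join_iff; auto. split. apply le_jl; auto.
    eapply le_trans; [exact SL| |apply le_jr; auto]. apply le_jl; auto.
  + eapply le_trans; [exact SL|exact H3|]. apply le_join_iff; auto. split. apply le_jl; auto.
    eapply le_trans; [exact SL| |apply le_jr; auto]. apply le_jr; auto. Qed.

Lemma sim_refl x : sim M x x.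
Proof. split; apply prec_refl. Qed.
Lemma sim_sym x y : sim M x y -> sim M y x.
Proof. intros [H1 H2]; split; auto. Qed.
Lemma sim_trans x y z : sim M x y -> sim M y z -> sim M x z.
Proof. intros [H1 H2] [H3 H4]; split; eapply prec_trans; eauto. Qed.

Lemma pjoin_prec x y x' y' : prec M x x' -> prec M y y' -> prec M (pjoin x y) (pjoin x' y').
Proof. intros. apply prec_lub. eapply prec_trans; eauto using prec_jl.
eapply prec_trans; eauto using prec_jr. Qed.
Lemma pjoin_sim x y x' y' : sim M x x' -> sim M y y' -> sim M (pjoin x y) (pjoin x' y').
Proof. intros [] []; split; apply pjoin_prec; auto. Qed.

Lemma prec_join_sim x y : prec M x y <-> sim M (pjoin x y) y.
Proof. split. intro; split. apply prec_lub; auto; apply prec_refl. apply prec_jr.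
intros [H1 _]. eapply prec_trans; [apply prec_jl|exact H1]. Qed.

Definition pK (x : M * list M) : M * list M := (fst x, [bigj j (fst x) (snd x)]).

Lemma pK_prec x y : prec M x y -> prec M (pK x) (pK y).
Proof. rewrite !prec_iff. destruct x as [a B], y as [c D]; simpl.
pose proof (slM HM) as SL.
set (s := bigj j c D).
assert (Ds : forall x, In x D -> lem x s). { intros; apply bigj_ub; auto; right; auto. }
assert (cs : lem c s). { apply bigj_ub; auto; left; auto. }
intros [H1 H2]. split.
- destruct H1 as [H1|[d [Sd H1]]]; [left; auto|right]. exists d. split; auto.
  simpl. apply SP_sp1 with D; auto.
- intros b [<-|[]]. exists s. split; [left; auto|].
  apply bigj_ind.
  + destruct H1 as [H1|[d [Sd H1]]].
    * apply sp_le. eapply le_trans; eauto.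
    * apply (@M3 _ HM _ (j c d)); auto. apply (M7 HM). apply sp_le; auto. apply SP_sp1 with D; auto.
  + intros x Hx. destruct (H2 x Hx) as [d [Hd S]]. eapply sp_trans1; eauto. apply sp_le; auto.
  + intros; apply (M7 HM); auto. Qed.

Lemma pK_ub x : prec M x (pK x).
Proof. apply prec_iff. destruct x as [a B]; simpl. pose proof (slM HM) as SL. split.
left; apply le_refl; auto. intros b Hb. exists (bigj j a B). split; [left; auto|].
apply sp_le. apply bigj_ub; auto; right; auto. Qed.

Lemma pK_idem x : pK (pK x) = pK x.
Proof. destruct x as [a B]. unfold pK; simpl. pose proof (slM HM) as SL.
assert (E : lem a (bigj j a B)) by (apply bigj_ub; auto; left; auto).
unfold le in E. rewrite E. reflexivity. Qed.

End Pairs.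
Arguments pjoin {M} x y.
Arguments pK {M} x.
Arguments SP {M} a L.
Lemma sig_eq (A : Type) (P : A -> Prop) (u v : sig P) : proj1_sig u = proj1_sig v -> u = v.
Proof. destruct u as [x p], v as [y q]; simpl. intro E. subst. f_equal. apply proof_irrelevance. Qed.

Section Quot.
Variable M : msl.
Hypothesis HM : is_mass M.
Local Notation j := (mjoin M).

Lemma cls_eq x y : tcls M x = tcls M y <-> sim M x y.
Proof. split.
- intro E. apply (f_equal (@proj1_sig _ _)) in E. simpl in E.
  assert (H : sim M x x) by (apply sim_refl; auto). rewrite E in H. apply sim_sym; auto.
- intro S. apply sig_eq. simpl. apply functional_extensionality. intro z.
  apply propositional_extensionality. split; intro H.
  + eapply sim_trans; eauto. apply sim_sym; auto.
  + eapply sim_trans; eauto. Qed.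

Lemma trep_cls (X : tcar M) : tcls M (trep X) = X.
Proof. apply sig_eq. simpl. unfold trep.
destruct (constructive_indefinite_description _ (proj2_sig X)) as [x Hx]. simpl. auto. Qed.

Lemma trep_sim x : sim M (trep (tcls M x)) x.
Proof. apply cls_eq. apply trep_cls. Qed.

Lemma cls_surj (X : tcar M) : exists x, X = tcls M x.
Proof. exists (trep X). symmetry. apply trep_cls. Qed.

Lemma tjoin_cls x y : tjoin (tcls M x) (tcls M y) = tcls M (pjoin x y).
Proof. unfold tjoin. change (tcls M (pjoin (trep (tcls M x)) (trep (tcls M y))) = tcls M (pjoin x y)).
apply cls_eq. apply pjoin_sim; auto; apply trep_sim. Qed.

Lemma pK_sim x y : sim M x y -> sim M (pK x) (pK y).
Proof. intros [H1 H2]. split; apply (pK_prec HM); auto. Qed.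

Lemma tK_cls x : tK (tcls M x) = tcls M (pK x).
Proof. unfold tK. change (tcls M (pK (trep (tcls M x))) = tcls M (pK x)).
apply cls_eq. apply pK_sim. apply trep_sim. Qed.

Lemma tle_cls x y : tle (tcls M x) (tcls M y) <-> prec M x y.
Proof. unfold tle. rewrite tjoin_cls, cls_eq. rewrite prec_join_sim; auto. tauto. Qed.

Lemma slT : isSL (@tjoin M).
Proof. constructor.
- intros X Y Z. destruct (cls_surj X) as [x ->], (cls_surj Y) as [y ->], (cls_surj Z) as [z ->].
  rewrite !tjoin_cls. f_equal. unfold pjoin; simpl. rewrite (sl_assoc HM), app_assoc. reflexivity.
- intros X Y. destruct (cls_surj X) as [x ->], (cls_surj Y) as [y ->].
  rewrite !tjoin_cls. apply cls_eq. split; apply (prec_lub HM); try apply (prec_jl HM); apply (prec_jr HM).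
- intros X. destruct (cls_surj X) as [x ->]. rewrite tjoin_cls. apply cls_eq.
  split. apply (prec_lub HM); auto; apply (prec_refl HM). apply (prec_jl HM). Qed.

Local Notation tl := (le (@tjoin M)).

Lemma tle_le (X Y : tcar M) : tle X Y <-> tl X Y.
Proof. reflexivity. Qed.

Lemma tK_ub (X : tcar M) : tl X (tK X).
Proof. destruct (cls_surj X) as [x ->]. rewrite tK_cls. apply tle_cls. apply (pK_ub HM). Qed.

Lemma tK_mono (X Y : tcar M) : tl X Y -> tl (tK X) (tK Y).
Proof. destruct (cls_surj X) as [x ->], (cls_surj Y) as [y ->]. rewrite !tK_cls.
intro H. apply tle_cls. apply tle_cls in H. apply (pK_prec HM); auto. Qed.

Lemma tK_idem (X : tcar M) : tK (tK X) = tK X.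
Proof. destruct (cls_surj X) as [x ->]. rewrite !tK_cls. rewrite pK_idem; auto. Qed.

Lemma mass_tilde : is_mass (Mtilde M).
Proof. pose proof slT as SL. constructor; simpl; try apply SL.
- intro a. unfold tspec. simpl. apply tK_ub.
- intros a b1 c bs H1 H2. unfold tspec in *. simpl in *.
  eapply le_trans; [exact SL|exact H1|]. apply bigj_monok; auto.
  rewrite <- (tK_idem c). apply tK_mono. exact H2.
- intros a b c cs H1 H2. unfold tspec in *. eapply le_trans; [exact SL|exact H1|exact H2].
- intros a b c bs cs H1 P. unfold tspec in *. eapply le_trans; [exact SL|exact H1|].
  apply bigj_sub; auto. intros x Hx. apply (Permutation_map (@tK M)) in P.
  simpl in P. eapply Permutation_in; eauto.
- intros a b bs H1. unfold tspec in *. eapply le_trans; [exact SL|exact H1|].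
  apply bigj_sub; auto. intros x Hx. simpl in Hx. rewrite map_app in Hx. simpl in Hx.
  destruct Hx as [<-|Hx]; [left; auto|]. apply in_app_or in Hx. destruct Hx as [Hx|[<-|[]]]; [right; auto|].
  assert (Hl : In (last bs b) (b :: bs)).
  { clear. revert b. induction bs as [|c bs IH]; intro b; [simpl; auto|].
    destruct bs as [|t bs]; [simpl; auto|].
    change (last (c :: t :: bs) b) with (last (t :: bs) b).
    destruct (IH b) as [E|E]; [left; exact E|right; right; exact E]. }
  destruct Hl as [<-|Hl]; [left; auto|right; apply in_map; auto].
- intros a b c bs H1. unfold tspec in *. eapply le_trans; [exact SL|exact H1|].
  apply bigj_sub; auto. intros x [<-|Hx]; [left; auto|right]. rewrite map_app. apply in_or_app; auto.
- intros a a1 b bs H1 H2. unfold tspec in *. apply le_join_iff; auto. Qed.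

Lemma isK_tK X Y : isK (Mtilde M) X Y -> Y = tK X.
Proof. pose proof slT as SL. intros [H1 H2]. apply le_antisym with (j := @tjoin M); auto.
apply H2. unfold mspec; simpl; unfold tspec; simpl. apply le_refl; auto. Qed.

Lemma isK_tK' X : isK (Mtilde M) X (tK X).
Proof. pose proof slT as SL. split.
- simpl; unfold tspec; simpl. apply le_refl; auto.
- intros z Hz. exact Hz. Qed.

Lemma regular_tilde : regular (Mtilde M).
Proof. pose proof slT as SL. split.
- intro X. exists (tK X). apply isK_tK'.
- intros a b bs. split.
  + intro H. exists (tK b), (map (@tK M) bs). split; [apply isK_tK'|]. split; [|exact H].
    clear H. induction bs; simpl; constructor; auto. apply isK_tK'.
  + intros [kb [kbs [H1 [H2 H3]]]]. apply isK_tK in H1. subst kb.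
    assert (kbs = map (@tK M) bs). { clear H3. induction H2; simpl; auto. f_equal; auto. apply isK_tK; auto. }
    subst. exact H3. Qed.

End Quot.
Section Emb.
Variable M : msl.
Hypothesis HM : is_mass M.
Local Notation j := (mjoin M).

Definition diag (c : M) : M * list M := (c, [c]).

Lemma bigj_tcls x l : bigj (@tjoin M) (tcls M x) (map (tcls M) l) = tcls M (bigj pjoin x l).
Proof. revert x; induction l as [|y l IH]; intro x; simpl; auto. rewrite tjoin_cls; auto. Qed.

Lemma bigj_diag k K l : bigj pjoin (k, K) (map diag l) = (bigj j k l, K ++ l).
Proof. revert k K; induction l as [|y l IH]; intros k K; simpl. rewrite app_nil_r; auto.
unfold pjoin at 2. simpl. rewrite IH, <- app_assoc. reflexivity. Qed.

Lemma tK_ups b : tK (ups M b) = tcls M (diag b).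
Proof. unfold ups. rewrite tK_cls; auto. Qed.

Lemma map_tK_ups l : @map (tcar M) (tcar M) (@tK M) (@map M (tcar M) (ups M) l) = map (tcls M) (map diag l).
Proof. induction l; simpl; auto. rewrite IHl, tK_ups. reflexivity. Qed.

Lemma tspec_ups a b bs : tspec (ups M a) (ups M b) (map (ups M) bs) <-> prec M (a, []) (bigj j b bs, b :: bs).
Proof. unfold tspec. change (tle (ups M a) (bigj (@tjoin M) (tK (ups M b)) (@map (tcar M) (tcar M) (@tK M) (@map M (tcar M) (ups M) bs))) <-> prec M (a, []) (bigj j b bs, b :: bs)).
rewrite map_tK_ups, tK_ups. unfold diag at 1. rewrite bigj_tcls, bigj_diag.
unfold ups. rewrite tle_cls; auto. reflexivity. Qed.

Lemma key_spec a b bs : mspec M a b bs <-> prec M (a, []) (bigj j b bs, b :: bs).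
Proof. pose proof (slM HM) as SL. rewrite (prec_iff HM). simpl. split.
- intro H. split. right. exists a. split. exact H. apply le_jr; auto. intros _ [].
- intros [H _]. change (SP a (b :: bs)). destruct H as [H|[d [Sd H]]].
  + apply (SP_M3 HM) with (bigj j b bs); auto. apply (SP_bigj HM).
  + apply (SP_M3 HM) with (j (bigj j b bs) d); auto. apply (SP_M7 HM); auto. apply (SP_bigj HM). Qed.

Lemma embedding_ups : embedding (ups M).
Proof. pose proof (slM HM) as SL. split; [split|split].
- intros a b. simpl. unfold ups. rewrite tjoin_cls; auto.
- intros a b bs H. simpl. apply tspec_ups. apply key_spec; auto.
- intros a b E. unfold ups in E. apply (cls_eq HM) in E. destruct E as [E1 E2].
  apply (prec_iff HM) in E1. apply (prec_iff HM) in E2. simpl in *.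
  destruct E1 as [[E1|[d [[] _]]] _], E2 as [[E2|[d [[] _]]] _]. apply le_antisym with (j := j); auto.
- intros a b bs H. apply key_spec. apply tspec_ups. exact H. Qed.

Lemma repr_tilde a B : tcls M (a, B) = bigj (@tjoin M) (ups M a) (map (fun b => tK (ups M b)) B).
Proof. pose proof (slM HM) as SL.
rewrite <- map_map, map_tK_ups. unfold ups at 1. rewrite bigj_tcls, bigj_diag. simpl.
apply (cls_eq HM). split; apply (prec_iff HM); simpl; split.
- left. apply bigj_ub; auto. left; auto.
- intros b Hb. exists b; split; auto. apply (M1 HM).
- destruct B as [|b bs]. left; simpl; apply le_refl; auto.
  right. exists (bigj j b bs). split. apply (SP_bigj HM).
  apply le_bigj_iff; auto. intros x [<-|[<-|Hx]].
  + apply le_jl; auto.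
  + eapply le_trans; [exact SL| |apply le_jr; auto]. apply bigj_ub; auto; left; auto.
  + eapply le_trans; [exact SL| |apply le_jr; auto]. apply bigj_ub; auto; right; auto.
- intros b Hb. exists b; split; auto. apply (M1 HM). Qed.

End Emb.
Section Univ.
Variable M : msl.
Hypothesis HM : is_mass M.
Variable T : msl.
Hypothesis HT : is_mass T.
Hypothesis RT : regular T.
Variable eta : M -> T.
Hypothesis Heta : hom eta.
Local Notation j := (mjoin M).
Local Notation jT := (mjoin T).
Local Notation leT := (le (mjoin T)).

Definition KT (x : T) : T := proj1_sig (constructive_indefinite_description _ (proj1 RT x)).

Lemma KT_isK x : isK T x (KT x).
Proof. unfold KT. destruct (constructive_indefinite_description _ _) as [y Hy]. exact Hy. Qed.

Lemma isK_uniq x y y' : isK T x y -> isK T x y' -> y = y'.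
Proof. intros [A1 A2] [B1 B2]. apply le_antisym with (j := jT). apply (slM HT).
apply B2; auto. apply A2; auto. Qed.

Lemma Forall2_KT bs kbs : Forall2 (isK T) bs kbs -> kbs = map KT bs.
Proof. induction 1; simpl; auto. f_equal; auto. eapply isK_uniq; eauto. apply KT_isK. Qed.

Lemma regT a b bs : mspec T a b bs <-> leT a (bigj jT (KT b) (map KT bs)).
Proof. split.
- intro H. apply (proj2 RT) in H. destruct H as [kb [kbs [H1 [H2 H3]]]].
  apply Forall2_KT in H2. subst kbs. rewrite (isK_uniq H1 (KT_isK b)) in H3. exact H3.
- intro H. apply (proj2 RT). exists (KT b), (map KT bs). split; [apply KT_isK|]. split; [|exact H].
  clear H. induction bs; simpl; constructor; auto. apply KT_isK. Qed.

Lemma KT_ub x : leT x (KT x).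
Proof. apply (proj2 (KT_isK x)). apply (M1 HT). Qed.

Lemma KT_le x y : leT x (KT y) -> leT (KT x) (KT y).
Proof. intro H. change (leT (KT x) (bigj jT (KT y) (map KT []))). apply regT.
apply (M2 HT _ x). apply (proj1 (KT_isK x)). apply regT. exact H. Qed.

Lemma KT_mono x y : leT x y -> leT (KT x) (KT y).
Proof. intro H. apply KT_le. eapply le_trans. apply (slM HT). exact H. apply KT_ub. Qed.

Lemma KT_idem x : KT (KT x) = KT x.
Proof. apply le_antisym with (j := jT). apply (slM HT). apply KT_le. apply le_refl, (slM HT).
apply KT_ub. Qed.

Lemma eta_join a b : eta (j a b) = jT (eta a) (eta b).
Proof. apply (proj1 Heta). Qed.

Lemma eta_le a b : le j a b -> leT (eta a) (eta b).
Proof. unfold le. intro H. rewrite <- eta_join, H. reflexivity. Qed.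

Definition fp (x : M * list M) : T := bigj jT (eta (fst x)) (map (fun b => KT (eta b)) (snd x)).

Lemma fp_mono x y : prec M x y -> leT (fp x) (fp y).
Proof. pose proof (slM HT) as SL. pose proof (slM HM) as SLM.
rewrite (prec_iff HM). destruct x as [a B], y as [c D]; simpl. intros [H1 H2].
unfold fp; simpl. apply le_bigj_iff; auto. intros x [<-|Hx].
- destruct H1 as [H1|[d [Sd H1]]].
  + eapply le_trans; [exact SL|apply eta_le; exact H1|]. apply bigj_ub; auto. left; auto.
  + eapply le_trans; [exact SL|apply eta_le; exact H1|]. rewrite eta_join.
    apply le_join_iff; auto. split. apply bigj_ub; auto; left; auto.
    destruct D as [|d1 ds]; [destruct Sd|]. simpl in Sd. apply (proj2 Heta) in Sd.
    apply regT in Sd. eapply le_trans; [exact SL|exact Sd|]. apply bigj_sub; auto.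
    intros z [<-|Hz]. right. simpl. left; auto.
    right. simpl. right. rewrite map_map in Hz. exact Hz.
- apply in_map_iff in Hx. destruct Hx as [b [<- Hb]].
  destruct (H2 b Hb) as [d [Hd S]]. apply (proj2 Heta) in S. apply regT in S. simpl in S.
  eapply le_trans; [exact SL|apply KT_le; exact S|]. apply bigj_ub; auto. right.
  apply (in_map (fun b => KT (eta b))); auto. Qed.

Definition fT (X : tcar M) : T := fp (trep X).

Lemma f_cls x : fT (tcls M x) = fp x.
Proof. unfold fT. destruct (trep_sim HM x) as [H1 H2]. apply le_antisym with (j := jT).
apply (slM HT). apply fp_mono; auto. apply fp_mono; auto. Qed.

Lemma f_join X Y : fT (tjoin X Y) = jT (fT X) (fT Y).
Proof. destruct (cls_surj X) as [x ->], (cls_surj Y) as [y ->].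
rewrite (tjoin_cls HM), !f_cls. unfold fp, pjoin; simpl. rewrite eta_join, map_app.
apply bigj_join_app, (slM HT). Qed.

Lemma f_K X : fT (tK X) = KT (fT X).
Proof. pose proof (slM HT) as SL. destruct (cls_surj X) as [[a B] ->].
rewrite (tK_cls HM), !f_cls. unfold fp, pK; simpl.
rewrite (@hom_bigj _ _ _ _ eta _ _ eta_join).
set (z := bigj jT (eta a) (map eta B)).
set (w := bigj jT (eta a) (map (fun b => KT (eta b)) B)).
assert (az : leT (eta a) z) by (apply bigj_ub; auto; left; auto).
assert (E : KT w = KT z).
{ apply le_antisym with (j := jT); auto.
  - apply KT_le. apply le_bigj_iff; auto. intros x [<-|Hx].
    + eapply le_trans; eauto. apply KT_ub.
    + apply in_map_iff in Hx. destruct Hx as [b [<- Hb]]. apply KT_mono. apply bigj_ub; auto.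
      right. apply in_map; auto.
  - apply KT_mono. unfold z, w. apply bigj_map_mono; auto. intro x. apply KT_ub. }
rewrite E. apply le_trans with (j := jT) (b := z); auto. apply KT_ub. Qed.

Lemma f_le X Y : le (@tjoin M) X Y -> leT (fT X) (fT Y).
Proof. unfold le. intro H. rewrite <- f_join, H. reflexivity. Qed.

Lemma Khom_f : @Khom (Mtilde M) T fT.
Proof. split; [split|].
- intros a b. apply f_join.
- intros a b bs H. simpl in H. unfold tspec in H. apply regT.
  apply f_le in H. rewrite (@hom_bigj _ _ _ _ fT _ _ f_join) in H. rewrite f_K, map_map in H.
  rewrite map_map. erewrite map_ext; [exact H|]. intro x; simpl. symmetry; apply f_K.
- intros a ka H. apply (isK_tK HM) in H. subst ka. rewrite f_K. apply KT_isK. Qed.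

Lemma f_ups a : fT (ups M a) = eta a.
Proof. unfold ups. rewrite f_cls. reflexivity. Qed.

Lemma f_uniq (g : Mtilde M -> T) : Khom g -> (forall a, g (ups M a) = eta a) -> forall X, g X = fT X.
Proof. intros [[Hj Hs] HK] Hg X. destruct (cls_surj X) as [[a B] ->].
rewrite f_cls, (repr_tilde HM). change (bigj (@tjoin M)) with (bigj (mjoin (Mtilde M))).
rewrite (@hom_bigj _ _ _ _ g _ _ Hj). rewrite Hg, map_map. unfold fp; simpl. f_equal.
apply map_ext. intro b. rewrite <- Hg. apply isK_uniq with (g (ups M b)).
apply HK. apply isK_tK'; auto. apply KT_isK. Qed.

End Univ.
Lemma part3 (M : msl) (HM : is_mass M) :
  forall T : msl, is_mass T -> regular T ->
   forall eta : M -> T, hom eta ->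
   exists f : Mtilde M -> T,
     Khom f /\ (forall a : M, f (ups M a) = eta a) /\
     (forall g : Mtilde M -> T, Khom g -> (forall a : M, g (ups M a) = eta a) ->
        forall x, g x = f x).
Proof. intros T HT RT eta Heta. exists (@fT M T RT eta). split; [|split].
- exact (Khom_f HM HT RT Heta).
- exact (f_ups HM HT RT Heta).
- intros g Hg Hga X. exact (f_uniq HM HT RT Heta Hg Hga X). Qed.

Lemma hom_comp (A B C : msl) (f : A -> B) (g : B -> C) : hom f -> hom g -> hom (fun a => g (f a)).
Proof. intros [F1 F2] [G1 G2]. split.
- intros a b. rewrite F1, G1. reflexivity.
- intros a b bs H. rewrite <- map_map. apply G2, F2, H. Qed.

Theorem theorem4p4 (M : msl) (HM : is_mass M) :
  (* (1) *)
  (is_mass (Mtilde M) /\ regular (Mtilde M)) /\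
  (* (2) *)
  embedding (ups M) /\
  (* (3) *)
  (forall T : msl, is_mass T -> regular T ->
   forall eta : M -> T, hom eta ->
   exists f : Mtilde M -> T,
     Khom f /\ (forall a : M, f (ups M a) = eta a) /\
     (forall g : Mtilde M -> T, Khom g -> (forall a : M, g (ups M a) = eta a) ->
        forall x, g x = f x)) /\
  (* (4) *)
  (forall U : msl, is_mass U ->
   forall psi : M -> U, hom psi ->
   exists f : Mtilde M -> Mtilde U,
     Khom f /\ (forall a : M, f (ups M a) = ups U (psi a)) /\
     (forall g : Mtilde M -> Mtilde U, Khom g ->
        (forall a : M, g (ups M a) = ups U (psi a)) ->
        forall x, g x = f x)).
Proof.
split; [split; [apply mass_tilde; auto | apply regular_tilde; auto]|].
split; [apply embedding_ups; auto|].
split; [apply part3; auto|].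
intros U HU psi Hpsi.
apply (part3 HM (mass_tilde HU) (regular_tilde HU) (eta := fun a => ups U (psi a))).
apply hom_comp; auto. apply (proj1 (embedding_ups HU)).
Qed.
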